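(* Let $\mathbb K=\prod_s\mathbb F_s^{alg}/\mathcal D$. Then $\mathbb K\cap\mathbb F^{alg}=\mathfrak K^{alg}$, where $\mathfrak K^{alg}$ is the set of elements of $\mathbb K$ algebraic over $\mathfrak K$ (an algebraic closure of $\mathfrak K$).
   Context: Let $S$ be an infinite set, $\mathcal D$ a nonprincipal ultrafilter on $S$; ultraproducts $\prod_sA_s/\mathcal D$ consist of tuples modulo agreement on a set in $\mathcal D$, classes written $\mathrm{ulim}_sa_s$, componentwise operations. For each $s$ let $\mathbb F_s$ be a field, $\mathfrak F_s=\mathbb F_s(t)$, fix an algebraic closure $\mathfrak F_s^{alg}$ and let $\mathbb F_s^{alg}\subseteq\mathfrak F_s^{alg}$ be the algebraic closure of $\mathbb F_s$ in it. Let $\mathfrak K=\prod_s\mathbb F_s/\mathcal D$, $\mathbb F=\mathfrak K(t)\subseteq\prod_s\mathfrak F_s/\mathcal D$ (via $\sum_i(\mathrm{ulim}_sa_{i,s})t^i\mapsto\mathrm{ulim}_s\sum_ia_{i,s}t^i$), and $\mathbb F^{alg}$ the set of elements of $\prod_s\mathfrak F_s^{alg}/\mathcal D$ algebraic over $\mathbb F$; note $\mathbb K\subseteq\prod_s\mathfrak F_s^{alg}/\mathcal D$. *)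

(* Defs.v *)
From HB Require Import structures.
From mathcomp Require Import all_boot all_order all_algebra.
From mathcomp Require Import boolp classical_sets cardinality filter.
Set Implicit Arguments. Unset Strict Implicit. Unset Printing Implicit Defensive.
Import GRing.Theory.
Local Open Scope ring_scope.
Local Open Scope classical_set_scope.

(* Ultraproducts are handled through representatives: an element of
   prod_s A_s / D is represented by x : forall s, A s, and two
   representatives define the same class iff they agree on a set in D.
   All predicates below are invariant under this relation. *)

Definition ueq (S : Type) (D : set_system S) (A : S -> Type)
  (x y : forall s, A s) : Prop := D [set s | x s = y s].

(* F_s(t) = {fraction {poly F s}};  t = 'X%:F;  constants c |-> (c%:P)%:F *)
Definition ratf (F : fieldType) := {fraction {poly F}}.
Definition cst (F : fieldType) (c : F) : ratf F := FracField.tofrac (c%:P).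
Definition ratpoly (F : fieldType) (p : {poly F}) : ratf F := FracField.tofrac p.

Definition is_alg_closure_of (K : fieldType) (L : closedFieldType)
  (emb : {rmorphism K -> L}) : Prop :=
  forall y : L, exists p : {poly K}, p != 0 /\ root (map_poly emb p) y.

(* y in L is algebraic over (the image of) F : y in F_s^alg *)
Definition alg_over_base (F : fieldType) (L : closedFieldType)
  (emb : {rmorphism ratf F -> L}) (y : L) : Prop :=
  exists p : {poly F}, p != 0 /\ root (map_poly (fun c => emb (cst c)) p) y.

Section Ultra.
Variables (S : Type) (D : set_system S) (F : S -> fieldType)
  (L : S -> closedFieldType) (emb : forall s, {rmorphism ratf (F s) -> L s}).

(* image in prod_s L_s / D of ulim_s c_s in K = prod_s F_s / D *)
Definition embK (c : forall s, F s) : forall s, L s := fun s => emb s (cst (c s)).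

(* image of a polynomial sum_{i<n} (ulim_s a_{i,s}) t^i in K[t]: ulim_s P_s,
   where P : forall s, {poly F s} with size (P s) <= n collects the
   coefficients a_{i,s} = (P s)`_i. It is nonzero in K[t] iff some
   coefficient is nonzero in K. *)
Definition Kpoly_nonzero (P : forall s, {poly F s}) (n : nat) : Prop :=
  exists2 i, (i < n)%N & D [set s | (P s)`_i != 0].

(* z (in prod L_s / D) lies in the image of F = K(t) *)
Definition inF (z : forall s, L s) : Prop :=
  exists (n : nat) (P Q : forall s, {poly F s}),
    [/\ forall s, (size (P s) <= n)%N, forall s, (size (Q s) <= n)%N,
        Kpoly_nonzero Q n &
        ueq D z (fun s => emb s (ratpoly (P s) / ratpoly (Q s)))].

Definition inFalg (x : forall s, L s) : Prop :=
  exists (m : nat) (z : nat -> forall s, L s),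
    [/\ forall j, (j < m)%N -> inF (z j),
        exists2 j, (j < m)%N & ~ ueq D (z j) (fun s => 0) &
        ueq D (fun s => \sum_(j < m) z j s * x s ^+ j) (fun s => 0)].

(* x in KK = prod_s F_s^alg / D (as a subset of prod_s L_s / D) *)
Definition inKK (x : forall s, L s) : Prop :=
  exists y : forall s, L s,
    ueq D x y /\ forall s, alg_over_base (@emb s) (y s).

Definition alg_over_K (x : forall s, L s) : Prop :=
  exists (m : nat) (c : nat -> forall s, F s),
    (exists2 j, (j < m)%N & ~ ueq D (embK (c j)) (fun s => 0)) /\
    ueq D (fun s => \sum_(j < m) embK (c j) s * x s ^+ j) (fun s => 0).

Definition inKalg (x : forall s, L s) : Prop := inKK x /\ alg_over_K x.

End Ultra.

(* Main.v *)
Require Import Defs.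
From HB Require Import structures.
From mathcomp Require Import all_boot all_order all_algebra.
From mathcomp Require Import boolp classical_sets cardinality filter.
Import GRing.Theory.
Local Open Scope ring_scope.
Local Open Scope classical_set_scope.

Lemma mapC_hornerX (F : fieldType) (p : {poly F}) : (map_poly polyC p).['X] = p.
Proof.
rewrite horner_coef size_map_polyC -[RHS]coefK poly_def.
by apply: eq_bigr => i _; rewrite coef_map /= mul_polyC.
Qed.

Lemma emb_horner (F : fieldType) (L : closedFieldType)
  (emb : {rmorphism ratf F -> L}) (p : {poly F}) :
  (map_poly (fun c => emb (cst c)) p).[emb (FracField.tofrac 'X)] =
  emb (FracField.tofrac p).
Proof.
have -> : map_poly (fun c => emb (cst c)) p =
  map_poly emb (map_poly (@FracField.tofrac _) (map_poly polyC p)).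
  by rewrite !map_poly_comp.
by rewrite !horner_map mapC_hornerX.
Qed.

Lemma transc (F : fieldType) (L : closedFieldType)
  (emb : {rmorphism ratf F -> L}) (q : {poly L}) :
  (forall i, algebraicOver (fun c => emb (cst c)) q`_i) ->
  q.[emb (FracField.tofrac 'X)] = 0 -> q = 0.
Proof.
move=> alg q0; apply/eqP; apply: contraT => qn0.
pose FtoE := (emb \o (@FracField.tofrac _) \o polyC).
have := @integral_root _ _ FtoE q (emb (FracField.tofrac 'X)) qn0 (introT eqP q0).
case.
  by move=> z /(nthP 0) [i _ <-]; apply: (proj1 (integral_algebraic FtoE _)); exact: alg.
move=> p /monic_neq0 pn0.
rewrite /root (_ : map_poly FtoE p = map_poly (fun c => emb (cst c)) p) //.
by rewrite emb_horner fmorph_eq0 tofrac_eq0 (negPf pn0).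
Qed.

Lemma ultra_union (T : Type) (D : set_system T) (U : UltraFilter D) (N : nat)
  (A : nat -> set T) :
  D [set s | exists2 i, (i < N)%N & A i s] -> exists2 i, (i < N)%N & D (A i).
Proof.
elim: N => [|N IH] H.
  exfalso; apply: (@filter_not_empty _ D _).
  by apply: filterS H => s [].
have [HA|HC] := in_ultra_setVsetC (A N) U; first by exists N.
have [|i iN Hi] := IH; last by exists i => //; apply: ltnW.
apply: filterS (filterI H HC) => s [[i iN Ai] nA].
exists i => //; rewrite ltn_neqAle -ltnS iN andbT.
by apply/eqP => eiN; apply: nA; rewrite -eiN.
Qed.

Lemma filter_bigI (T : Type) (D : set_system T) (FD : Filter D) (m : nat)
  (A : nat -> set T) :
  (forall j, (j < m)%N -> D (A j)) -> D [set s | forall j, (j < m)%N -> A j s].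
Proof.
elim: m => [|m IH] H.
  by apply: filterS (@filterT _ D FD) => s _ j.
apply: filterS (filterI (IH (fun j jm => H j (ltnW jm))) (H m (ltnSn m))).
move=> s [H1 H2] j; rewrite ltnS leq_eqVlt => /orP [/eqP -> //|]; exact: H1.
Qed.

Lemma ultra_neq (T : Type) (D : set_system T) (U : UltraFilter D) (V : T -> Type)
  (a b : forall t, V t) :
  ~ D [set s | a s = b s] -> D [set s | a s <> b s].
Proof.
move=> H; have [/H []|HC] := in_ultra_setVsetC [set s | a s = b s] U; exact: HC.
Qed.

Theorem mainTheorem6 (S : Type) (D : set_system S)
  (S_inf : infinite_set [set: S])
  (D_ultra : UltraFilter D) (D_nonprincipal : forall s : S, ~ D [set s])
  (F : S -> fieldType) (L : S -> closedFieldType)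
  (emb : forall s, {rmorphism ratf (F s) -> L s})
  (L_alg : forall s, is_alg_closure_of (emb s)) :
  forall x : forall s, L s,
    (inKK D emb x /\ inFalg D emb x) <-> inKalg D emb x.
Proof.
move=> x; split; last first.
  move=> [HKK [m [c [[j0 j0m Hj0] Hsum]]]]; split => //.
  exists m, (fun j => embK emb (c j)); split.
  - move=> j jm; exists 1%N, (fun s => (c j s)%:P), (fun s => 1); split.
    + by move=> s; apply: size_polyC_leq1.
    + by move=> s; rewrite size_poly1.
    + exists 0%N => //; apply: filterS (@filterT _ D _) => s _ /=.
      by rewrite coef1 oner_eq0.
    + apply: filterS (@filterT _ D _) => s _ /=.
      by rewrite /ratpoly tofrac1 divr1.
  - by exists j0.
  - exact: Hsum.
move=> [HKK [m [z [Hz [j0 j0m Hj0] Hsum]]]]; split => //.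
case: (HKK) => y [Hxy Hy].
have: forall j, exists t : nat * (forall s, {poly F s}) * (forall s, {poly F s}),
  (j < m)%N -> [/\ forall s, (size (t.1.2 s) <= t.1.1)%N,
     forall s, (size (t.2 s) <= t.1.1)%N, Kpoly_nonzero D t.2 t.1.1 &
     ueq D (z j) (fun s => emb s (ratpoly (t.1.2 s) / ratpoly (t.2 s)))].
  move=> j; case: (ltnP j m) => hj; last first.
    by exists (0%N, (fun s => 0), (fun s => 0)).
  by have [n [P [Q H]]] := Hz j hj; exists (n, P, Q).
move=> /choice [f Hf].
pose n := fun j => (f j).1.1; pose P := fun j => (f j).1.2; pose Q := fun j => (f j).2.
pose M := (\sum_(k < m) n k)%N.
have nM : forall k, (k < m)%N -> (n k <= M)%N.
  by move=> k km; rewrite /M (bigD1 (Ordinal km)) //= leq_addr.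
pose R := fun j s => P j s * \prod_(k < m | (k : nat) != j) Q k s.
pose N := (M + (m * M).+1)%N.
have sizeR : forall j s, (j < m)%N -> (size (R j s) <= N)%N.
  move=> j s jm; rewrite /R /N.
  apply: leq_trans (size_mul_leq _ _) _.
  apply: leq_trans (leq_pred _) _.
  apply: leq_add; first by apply: leq_trans (nM j jm); case: (Hf j jm).
  apply: leq_trans (size_poly_prod_leq _ _) _.
  apply: leq_trans (leq_subr _ _) _; rewrite ltnS.
  apply: (@leq_trans (\sum_(k < m | (k:nat) != j) M)%N); first apply: leq_sum.
    by move=> k _; apply: leq_trans (nM k (ltn_ord k)); case: (Hf k (ltn_ord k)).
  rewrite big_mkcond /=; apply: (@leq_trans (\sum_(k < m) M)%N); first by apply: leq_sum => k _; case: ifP.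
  by rewrite sum_nat_const card_ord.
pose G := [set s | [/\ x s = y s, \sum_(j < m) z j s * x s ^+ j = 0, z j0 s <> 0 &
   forall j, (j < m)%N -> z j s = emb s (ratpoly (P j s) / ratpoly (Q j s)) /\ Q j s != 0]].
have DG : D G.
  have H4 : D [set s | forall j, (j < m)%N ->
      z j s = emb s (ratpoly (P j s) / ratpoly (Q j s)) /\ Q j s != 0].
    apply: filter_bigI => j jm; case: (Hf j jm) => _ _ [i _ Hi] Hu.
    apply: filterS (filterI Hu Hi) => s [/= e ne]; split => //.
    by apply/eqP => Q0; move: ne; rewrite /Q in Q0 *; rewrite Q0 coef0 eqxx.
  have H3 := @ultra_neq _ _ D_ultra (fun s => L s) (z j0) (fun s => 0) Hj0.
  apply: filterS (filterI (filterI Hxy Hsum) (filterI H3 H4)).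
  by move=> s [[e1 e2] [e3 e4]]; split.
have key : forall s, G s -> forall i,
    \sum_(j < m) embK emb (fun s => (R j s)`_i) s * x s ^+ j = 0.
  move=> s [e1 e2 e3 e4] i.
  pose q := \sum_(j < m) map_poly (fun c => emb s (cst c)) (R j s) * (x s ^+ j)%:P.
  have qi : q`_i = \sum_(j < m) embK emb (fun s => (R j s)`_i) s * x s ^+ j.
    rewrite /q coef_sum; apply: eq_bigr => j _.
    by rewrite coefMC coef_map_id0 // /cst polyC0 tofrac0 rmorph0.
  rewrite -qi (@transc _ _ (emb s) q) ?coef0 //.
    move=> k; rewrite /q coef_sum.
    have algx : forall j, algebraicOver (fun c => emb s (cst c)) (x s ^+ j).
      have FtoE := (emb s \o (@FracField.tofrac _) \o polyC).
      move=> j; elim: j => [|j IH].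
        by rewrite expr0; apply: (@algebraic1 _ _ (emb s \o (@FracField.tofrac _) \o polyC)).
      rewrite exprS; apply: (@algebraic_mul _ _ (emb s \o (@FracField.tofrac _) \o polyC)) => //.
      by rewrite e1; case: (Hy s) => p [pn0 rp]; exists p.
    apply: (big_ind (algebraicOver (fun c => emb s (cst c)))).
    - exact: (@algebraic0 _ _ (emb s \o (@FracField.tofrac _) \o polyC)).
    - exact: (@algebraic_add _ _ (emb s \o (@FracField.tofrac _) \o polyC)).
    move=> j _; rewrite coefMC coef_map_id0; last by rewrite /cst polyC0 tofrac0 rmorph0.
    apply: (@algebraic_mul _ _ (emb s \o (@FracField.tofrac _) \o polyC)) => //.
    exact: (@algebraic_id _ _ (emb s \o (@FracField.tofrac _) \o polyC)).
  rewrite /q horner_sum.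
  transitivity (emb s (FracField.tofrac (\prod_(k < m) Q k s)) *
      \sum_(j < m) z j s * x s ^+ j); last by rewrite e2 mulr0.
  rewrite mulr_sumr; apply: eq_bigr => j _.
  rewrite hornerM hornerC emb_horner mulrA; congr (_ * _).
  have [-> Qj] := e4 j (ltn_ord j).
  rewrite -rmorphM; congr (emb s _).
  rewrite /R [in RHS](bigD1 j) //= !tofracM /ratpoly (eq_bigl (fun k : 'I_m => k != j)) //.
  have Qj' : FracField.tofrac (Q j s) != 0 by rewrite tofrac_eq0.
  by rewrite [RHS]mulrAC [_ * (_ / _)]mulrC divfK.
have Rnz : forall s, G s -> R j0 s != 0.
  move=> s [_ _ e3 e4]; have [ez _] := e4 j0 j0m.
  rewrite /R mulf_neq0 //.
    apply/eqP => P0; apply: e3; rewrite ez P0 /ratpoly tofrac0 mul0r rmorph0 //.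
  rewrite prodf_seq_neq0; apply/allP => k _; apply/implyP => _.
  by case: (e4 k (ltn_ord k)).
have [i iN Hi] : exists2 i, (i < N)%N & D [set s | (R j0 s)`_i != 0].
  apply: ultra_union => //; apply: filterS DG => s Gs.
  have Rn := Rnz s Gs.
  exists (size (R j0 s)).-1.
    apply: leq_trans (sizeR j0 s j0m).
    by rewrite prednK // size_poly_gt0.
  by rewrite /= -lead_coefE lead_coef_eq0.
exists m, (fun j s => (R j s)`_i); split; last first.
  by apply: filterS DG => s Gs; apply: key.
exists j0 => // H.
apply: (@filter_not_empty _ D _).
apply: filterS (filterI H Hi) => s [/= e ne].
move: e; rewrite /embK /cst => /eqP; rewrite fmorph_eq0 tofrac_eq0 polyC_eq0.
by rewrite (negPf ne).
Qed.
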